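(* Let $\Lambda=k(\Gamma,\mathcal{A})$ be a generalized path algebra without relations. Let $i\in\Gamma_0$, $1\le j\le s_i$, and let $((M_l)_{l\in\Gamma_0},(\phi_\alpha)_{\alpha\in\Gamma_1})$ be the representation of $P(i,j)=\overline{e_{ij}}\Lambda$. Then: - $M_i=P_i^j=e_{ij}A_i$; - for $l\neq i$, $M_l\cong A_l^{n_l}$ as $A_l$-modules, where $$n_l=\sum_{\gamma:\,i=i_0\to i_1\to\cdots\to i_r=l}(\dim_kP_i^j)(\dim_kA_{i_1})\cdots(\dim_kA_{i_{r-1}}),$$ summed over all paths $\gamma$ from $i$ to $l$ in $\Gamma$. In particular $M_l=0$ if there is no path from $i$ to $l$.
   Context: $k$ is an algebraically closed field, $\Gamma$ a finite acyclic quiver, and $\mathcal{A}=\{A_i:i\in\Gamma_0\}$ finite-dimensional basic $k$-algebras. The generalized path algebra $k(\Gamma,\mathcal{A})$ is spanned by $\mathcal{A}$-paths $a_1\beta_1\cdots a_n\beta_na_{n+1}$ ($\beta_1\cdots\beta_n$ a path of $\Gamma$, $a_i\in A_{s(\beta_i)}$, $a_{n+1}\in A_{e(\beta_n)}$), modulo multilinearity, with concatenation product (multiplying adjacent algebra entries, or $0$ if paths don't compose). For each $i$, $\{e_{i1},\dots,e_{is_i}\}$ is a complete set of primitive pairwise orthogonal idempotents of $A_i$. $P_i^j=e_{ij}A_i$, and $\overline{e_{ij}}$ is the class of $e_{ij}$ in $\Lambda$. The representation of a right $\Lambda$-module $X$ has $X_l=X\cdot1_l$ ($1_l$ the identity of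 $A_l$) and $\phi_\alpha(x)=x\alpha$. *)

(* Defs.v *)
From HB Require Import structures.
From mathcomp Require Import all_boot all_order all_algebra.
From mathcomp Require Import falgebra.
Set Implicit Arguments.
Unset Strict Implicit.
Unset Printing Implicit Defensive.
Import GRing.Theory.
Local Open Scope ring_scope.

Section Quiver.
Variables (V E : finType) (src tgt : E -> V).

Fixpoint pathb (v w : V) (p : seq E) : bool :=
  if p is b :: p' then (src b == v) && pathb (tgt b) w p' else v == w.

Definition acyclic : Prop := forall (v : V) (p : seq E), pathb v v p -> p = [::].

End Quiver.

Section Idempotents.
Variable (R : nzRingType).

Definition idempotent (x : R) : Prop := x * x = x.

Definition primitive_idempotent (x : R) : Prop :=
  [/\ idempotent x, x <> 0 &
      forall f g : R, idempotent f -> idempotent g -> f * g = 0 -> g * f = 0 ->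
        f + g = x -> f = 0 \/ g = 0].

Definition complete_prim_orth (s : nat) (e : 'I_s -> R) : Prop :=
  [/\ forall x, primitive_idempotent (e x),
      forall x y, x != y -> e x * e y = 0 &
      \sum_(x < s) e x = 1].

(* Isomorphism of right modules, for "modules" given as subsets of
   additive groups X, Y with right actions of R. *)
Definition rmod_iso (X Y : zmodType) (actX : X -> R -> X) (actY : Y -> R -> Y)
  (PX : X -> Prop) (PY : Y -> Prop) : Prop :=
  exists f : X -> Y,
  [/\ forall x, PX x -> PY (f x),
      forall x x', PX x -> PX x' -> f (x + x') = f x + f x',
      forall x r, PX x -> f (actX x r) = actY (f x) r,
      forall y, PY y -> exists x, PX x /\ f x = y &
      forall x x', PX x -> PX x' -> f x = f x' -> x = x'].

Definition rideal (e : R) : R -> Prop := fun m => exists a, m = e * a.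

Definition basic_wrt (s : nat) (e : 'I_s -> R) : Prop :=
  forall x y, x != y ->
    ~ rmod_iso (fun m r => m * r) (fun m r => m * r) (rideal (e x)) (rideal (e y)).

End Idempotents.

Section GPA.
Variables (k : fieldType) (V E : finType) (src tgt : E -> V)
          (A : V -> falgType k) (L : falgType k)
          (iota : forall v, 'Hom(A v, L)) (arr : E -> L).

(* the subspace of L spanned by the A-paths a0 b1 a1 ... br ar along the
   arrow sequence p starting at vertex v *)
Fixpoint Apath_space (v : V) (p : seq E) : {vspace L} :=
  match p with
  | [::] => (iota v @: fullv)%VS
  | b :: p' => prodv (prodv (iota v @: fullv) <[arr b]>) (Apath_space (tgt b) p')
  end.

(* sum over all paths (of the acyclic quiver) of a nat-valued weight;
   paths in an acyclic quiver have length < #|V|. *)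
Definition sum_paths (v w : V) (F : seq E -> nat) : nat :=
  (\sum_(r < #|V|) \sum_(p : r.-tuple E | pathb src tgt v w p) F p)%N.

(* (L, iota, arr) is the generalized path algebra k(Gamma, A):
   - iota v : A v -> L is k-linear, multiplicative, iota_v(1) = 1_v are
     pairwise orthogonal idempotents summing to 1 (trivial A-paths);
   - arrow alpha is the A-path 1_{s(alpha)} alpha 1_{t(alpha)};
   - L is spanned by the A-paths;
   - dim L equals the dimension of the span of A-paths modulo
     multilinearity, i.e. sum over paths of the products of dim A_v along
     the path (this expresses that there are no further relations). *)
Definition is_gen_path_algebra : Prop :=
  [/\ forall v (a b : A v), iota v (a * b) = iota v a * iota v b,
      (forall u v, u != v -> iota u 1 * iota v 1 = 0) /\
      \sum_(v : V) iota v 1 = 1,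
      forall b : E, iota (src b) 1 * arr b * iota (tgt b) 1 = arr b,
      (\sum_(v : V) \sum_(w : V) \sum_(r < #|V|)
          \sum_(p : r.-tuple E | pathb src tgt v w p) Apath_space v p)%VS = fullv &
      (\dim (fullv : {vspace L}) =
        \sum_(v : V) \sum_(w : V)
          sum_paths v w (fun p => \prod_(u <- v :: map tgt p) \dim (fullv : {vspace A u})))%N].

End GPA.

(* Main.v *)
Require Import Defs.
From HB Require Import structures.
From mathcomp Require Import all_boot all_order all_algebra.
From mathcomp Require Import all_field.
Import GRing.Theory.
Local Open Scope ring_scope.
Section G.
Variables (K : fieldType) (aT : falgType K).
Lemma amullE (c x : aT) : amull c x = c * x.
Proof. by rewrite lfunE. Qed.
Lemma amulrE (c x : aT) : amulr c x = x * c.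
Proof. by rewrite lfunE. Qed.
Lemma prodv_lmul (c : aT) (lam : K) (U W : {vspace aT}) :
  {in U, forall u, c * u = lam *: u} -> {in (U * W)%VS, forall x, c * x = lam *: x}.
Proof.
move=> H x Hx.
have: x \in lker (amull c - lam *: \1)%VF.
  apply: subvP Hx; apply/prodvP=> u w Hu Hw.
  by rewrite memv_ker !lfunE /= !lfunE /= mulrA H // scale_lfunE id_lfunE -scalerAl subrr.
by rewrite memv_ker !lfunE /= !lfunE /= scale_lfunE id_lfunE subr_eq0 => /eqP.
Qed.
Lemma prodv_rmul (c : aT) (lam : K) (U W : {vspace aT}) :
  {in W, forall w, w * c = lam *: w} -> {in (U * W)%VS, forall x, x * c = lam *: x}.
Proof.
move=> H x Hx.
have: x \in lker (amulr c - lam *: \1)%VF.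
  apply: subvP Hx; apply/prodvP=> u w Hu Hw.
  by rewrite memv_ker !lfunE /= !lfunE /= -mulrA H // scale_lfunE id_lfunE -scalerAr subrr.
by rewrite memv_ker !lfunE /= !lfunE /= scale_lfunE id_lfunE subr_eq0 => /eqP.
Qed.
Lemma amullE_dummy : True. Proof. by []. Qed.
Lemma dim_img_leq (rT : vectType K) (f : 'Hom(aT, rT)) (U : {vspace aT}) : (\dim (f @: U) <= \dim U)%N.
Proof. by rewrite -(limg_ker_dim f U) leq_addl. Qed.
Lemma idem_split_dim (d : aT) : d * d = d ->
  (\dim (<[d]> * fullv) + \dim (<[1 - d]> * fullv) <= \dim (fullv : {vspace aT}))%N.
Proof.
move=> dd.
rewrite -dimv_sum_cap.
have ->: (<[d]> * fullv :&: <[1 - d]> * fullv = 0)%VS.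
  apply/eqP; rewrite -subv0; apply/subvP=> x /memv_capP[H1 H2].
  have e1 : d * x = 1 *: x.
    apply: (@prodv_lmul d 1 <[d]> fullv) H1 => u /vlineP[a ->]; by rewrite -scalerAr dd scale1r.
  have e2 : d * x = 0 *: x.
    apply: (@prodv_lmul d 0 <[1-d]> fullv) H2 => u /vlineP[a ->].
    by rewrite -scalerAr mulrBr mulr1 dd subrr scaler0 scale0r.
  by rewrite memv0 -(scale1r x) -e1 e2 scale0r.
by rewrite dimv0 addn0 dimvS // subvf.
Qed.
End G.
Lemma sum_squeeze (I : finType) (a b : I -> nat) :
  (forall x, a x <= b x)%N -> (\sum_x b x <= \sum_x a x)%N -> forall x, a x = b x.
Proof.
move=> H Hs x; apply/eqP; rewrite eqn_leq H /=; apply: contraLR Hs; rewrite -!ltnNge => Hx.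
rewrite (bigD1 x) //= [X in (_ < X)%N](bigD1 x) //= -addSn.
by apply: leq_add Hx _; apply: leq_sum => y _.
Qed.
Arguments prodv_lmul {K aT} c lam {U W}.
Arguments prodv_rmul {K aT} c lam {U W}.
Arguments dim_img_leq {K aT rT} f U.
Arguments idem_split_dim {K aT} d.
Arguments sum_squeeze {I a b}.

Set Implicit Arguments. Unset Strict Implicit.

Section Main.
Variables (k : fieldType) (V E : finType) (src tgt : E -> V)
  (A : V -> falgType k) (L : falgType k) (iota : forall v, 'Hom(A v, L)) (arr : E -> L).
Hypothesis HL : is_gen_path_algebra src tgt iota arr.

Local Notation S := (Apath_space tgt iota arr).
Local Notation one v := (iota v 1).
Local Notation I v := (iota v @: fullv)%VS.

Lemma iota_mul v (a b : A v) : iota v (a * b) = iota v a * iota v b.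
Proof. by case: HL. Qed.
Lemma iotaL v (a : A v) : one v * iota v a = iota v a.
Proof. by rewrite -iota_mul mul1r. Qed.
Lemma iotaR v (a : A v) : iota v a * one v = iota v a.
Proof. by rewrite -iota_mul mulr1. Qed.
Lemma one_orth u v : u != v -> one u * one v = 0.
Proof. by case: HL => _ [H _] _ _ _; apply: H. Qed.

Lemma S_ends u w p : pathb src tgt u w p ->
  {in S u p, forall x, one u * x = x /\ x * one w = x}.
Proof.
elim: p u => [|b p IH] u /=.
  move=> /eqP <- x /memv_imgP[a _ ->]; by rewrite iotaL iotaR.
move=> /andP[/eqP Hs Hp] x Hx; split.
  rewrite -[RHS]scale1r; apply: (prodv_lmul _ 1 _ _ Hx) => y Hy; rewrite scale1r.
  rewrite -[RHS]scale1r; apply: (prodv_lmul _ 1 _ _ Hy) => z /memv_imgP[a _ ->].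
  by rewrite scale1r iotaL.
rewrite -[RHS]scale1r; apply: (prodv_rmul _ 1 _ _ Hx) => y Hy; rewrite scale1r.
by case: (IH _ Hp y Hy).
Qed.
Hypothesis Hac : acyclic src tgt.

Lemma full_ind (g : 'End(L)) (Z : {vspace L}) :
  (forall v w (r : 'I_#|V|) (p : r.-tuple E), pathb src tgt v w p -> {in S v p, forall x, g x \in Z}) ->
  forall x, g x \in Z.
Proof.
move=> H x; rewrite memv_preim; apply: subvP (memvf x).
case: HL => _ _ _ <- _.
apply/subv_sumP => v _; apply/subv_sumP => w _; apply/subv_sumP => r _.
apply/subv_sumP => p Hp; apply/subvP => y Hy; rewrite -memv_preim; exact: H Hp y Hy.
Qed.

Definition P v (c : A v) w : {vspace L} :=
  ((amulr (one w) \o amull (iota v c)) @: fullv)%VS.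
Arguments P : clear implicits.

Lemma memP v c w m : m \in P v c w <-> exists x, m = iota v c * x * one w.
Proof.
split.
  by move=> /memv_imgP[x _ ->]; exists x; rewrite comp_lfunE amulrE amullE.
move=> [x ->]; have := memv_img (amulr (one w) \o amull (iota v c))%VF (memvf x).
by rewrite comp_lfunE amulrE amullE.
Qed.

Lemma zero_left v (c : A v) v' y : v' != v -> one v' * y = y -> iota v c * y = 0.
Proof.
move=> Hv Hy; rewrite -Hy -(iotaR c) -mulrA (mulrA (one v)) one_orth ?mul0r ?mulr0 //.
by rewrite eq_sym.
Qed.

Lemma zero_right w w' y : w' != w -> y * one w' = y -> y * one w = 0.
Proof. by move=> Hw Hy; rewrite -Hy -mulrA one_orth // mulr0. Qed.

Lemma P_diag v (c : A v) : (P v c v <= iota v @: (<[c]> * fullv))%VS.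
Proof.
apply/subvP=> m /memP[x ->].
suff: (amulr (one v) \o amull (iota v c))%VF x \in (iota v @: (<[c]> * fullv))%VS.
  by rewrite comp_lfunE amulrE amullE.
apply: full_ind => v' w' r p Hp y Hy.
rewrite comp_lfunE amulrE amullE.
have [Hl Hr] := S_ends Hp Hy.
have [ev|nv] := eqVneq v' v; last by rewrite (zero_left c nv Hl) mul0r mem0v.
have [ew|nw] := eqVneq w' v; last by rewrite -mulrA (zero_right nw Hr) mulr0 mem0v.
subst v' w'.
move: Hy; rewrite (Hac Hp) /= => /memv_imgP[a _ ->].
rewrite -!iota_mul; apply: memv_img; rewrite -mulrA; apply: memv_mul; by rewrite ?memv_line ?memvf.
Qed.
Fixpoint Ys (X : {vspace L}) (u : V) (p : seq E) : seq L :=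
  match p with
  | [::] => [::]
  | b :: p' => let X' := ((X * I u) * <[arr b]>)%VS in
               if p' is [::] then (vbasis X' : seq L) else Ys X' (tgt b) p'
  end.

Lemma dimI v : (\dim (I v) <= \dim (fullv : {vspace A v}))%N.
Proof. exact: dim_img_leq. Qed.

Lemma Ys_spec X u w p : pathb src tgt u w p -> p != [::] ->
  (X * S u p <= <<Ys X u p>> * I w)%VS /\
  (size (Ys X u p) <= \dim (X * I u) *
      \prod_(b <- take (size p).-1 p) \dim (fullv : {vspace A (tgt b)}))%N.
Proof.
elim: p X u => [//|b p IH] X u /= /andP[/eqP Hs Hp] _.
case: p IH Hp => [|b' p] IH Hp.
  move: Hp => /eqP <-; rewrite /= (span_basis (vbasisP _)) !prodvA; split=> //.
  rewrite size_tuple big_nil muln1.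
  apply: leq_trans (dim_prodv _ _) _; rewrite -[X in (_ <= X)%N]muln1 leq_mul //.
  by rewrite dim_vline leq_b1.
have [H1 H2] := IH ((X * I u) * <[arr b]>)%VS (tgt b) Hp isT.
split; first by apply: subv_trans H1; rewrite prodvA (prodvA X).
apply: leq_trans H2 _; rewrite /= big_cons mulnA leq_mul //.
apply: leq_trans (dim_prodv _ _) _; apply: leq_mul (dimI _).
apply: leq_trans (dim_prodv _ _) _; rewrite -[X in (_ <= X)%N]muln1 leq_mul //.
by rewrite dim_vline leq_b1.
Qed.

Lemma prod_last (F : V -> nat) u w p : pathb src tgt u w p -> p != [::] ->
  (\prod_(b <- p) F (tgt b) = (\prod_(b <- take (size p).-1 p) F (tgt b)) * F w)%N.
Proof.
elim: p u => [//|b p IH] u /= /andP[_ Hp] _.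
case: p IH Hp => [|b' p] IH Hp.
  by move: Hp => /eqP <-; rewrite big_seq1 big_nil mul1n.
by rewrite big_cons (IH _ Hp isT) /= big_cons mulnA.
Qed.
Definition Yall (X : {vspace L}) v w : seq L :=
  \big[cat/[::]]_(r < #|V|) \big[cat/[::]]_(p : r.-tuple E | pathb src tgt v w p) Ys X v p.

Definition nn v (c : A v) w := sum_paths src tgt v w
  (fun p => (\dim (<[c]> * fullv) *
     \prod_(b <- take (size p).-1 p) \dim (fullv : {vspace A (tgt b)}))%N).

Lemma dim_cI v (c : A v) : (\dim (<[iota v c]> * I v) <= \dim (<[c]> * fullv))%N.
Proof.
apply: leq_trans _ (dim_img_leq (iota v) _).
apply: dimvS; apply/prodvP => x y /vlineP[al ->] /memv_imgP[a _ ->].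
rewrite -scalerAl -iota_mul -linearZ; apply: memv_img.
by apply: memvZ; apply: memv_mul; rewrite ?memv_line ?memvf.
Qed.

Lemma span_big_cat I0 (r : seq I0) (Pr : pred I0) (F : I0 -> seq L) :
  <<\big[cat/[::]]_(i <- r | Pr i) F i>>%VS = (\sum_(i <- r | Pr i) <<F i>>)%VS.
Proof. by apply: (big_morph _ (@span_cat _ _) (@span_nil _ _)). Qed.

Lemma size_big_cat I0 (r : seq I0) (Pr : pred I0) (F : I0 -> seq L) :
  size (\big[cat/[::]]_(i <- r | Pr i) F i) = (\sum_(i <- r | Pr i) size (F i))%N.
Proof. by apply: (big_morph _ (@size_cat _) (erefl _)). Qed.

Lemma P_off v (c : A v) w : w != v ->
  (P v c w <= <<Yall <[iota v c]> v w>> * I w)%VS /\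
  (size (Yall <[iota v c]> v w) <= nn c w)%N.
Proof.
move=> nwv; split.
  apply/subvP=> m /memP[x ->].
  suff: (amulr (one w) \o amull (iota v c))%VF x \in (<<Yall <[iota v c]> v w>> * I w)%VS.
    by rewrite comp_lfunE amulrE amullE.
  apply: full_ind => v' w' r p Hp y Hy.
  rewrite comp_lfunE amulrE amullE.
  have [Hl Hr] := S_ends Hp Hy.
  have [ev|ne] := eqVneq v' v; last by rewrite (zero_left c ne Hl) mul0r mem0v.
  have [ew|ne] := eqVneq w' w; last by rewrite -mulrA (zero_right ne Hr) mulr0 mem0v.
  subst v' w'.
  have pn : (p : seq E) != [::].
    by apply: contra_neq nwv => p0; move: Hp; rewrite p0 /= eq_sym => /eqP.
  have [H1 _] := Ys_spec <[iota v c]> Hp pn.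
  rewrite -mulrA Hr; apply: (subvP (prodvSl _ _)); last first.
    by apply: (subvP H1); apply: memv_mul; rewrite ?memv_line.
  rewrite /Yall span_big_cat; apply: (sumv_sup r) => //.
  by rewrite span_big_cat; apply: (sumv_sup p).
rewrite /Yall size_big_cat /nn /sum_paths; apply: leq_sum => r _.
rewrite size_big_cat; apply: leq_sum => p Hp.
have pn : (p : seq E) != [::].
  by apply: contra_neq nwv => p0; move: Hp; rewrite p0 /= eq_sym => /eqP.
have [_ H2] := Ys_spec <[iota v c]> Hp pn.
by apply: leq_trans H2 _; rewrite leq_mul // dim_cI.
Qed.
Definition Nb v (c : A v) w : nat :=
  if w == v then \dim (<[c]> * fullv) else (nn c w * \dim (fullv : {vspace A w}))%N.

Lemma P_dim v (c : A v) w : (\dim (P v c w) <= Nb c w)%N.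
Proof.
rewrite /Nb; case: eqVneq => [->|nwv].
  exact: leq_trans (dimvS (P_diag c)) (dim_img_leq _ _).
have [H1 H2] := P_off c nwv.
apply: leq_trans (dimvS H1) _; apply: leq_trans (dim_prodv _ _) _.
by apply: leq_mul (dimI w); apply: leq_trans (dim_span _) H2.
Qed.

Definition dsel (i : V) (x : A i) (v : V) : A v :=
  match v =P i with ReflectT H => eq_rect_r A x H | ReflectF _ => 1 end.

Lemma dsel_i i (x : A i) : dsel x i = x.
Proof. by rewrite /dsel; case: eqP => // H; rewrite (eq_irrelevance H erefl). Qed.

Lemma dsel_idem i (x : A i) v : x * x = x -> dsel x v * dsel x v = dsel x v.
Proof. by move=> xx; rewrite /dsel; case: eqP => [H|_]; [subst v | rewrite mulr1]. Qed.

Lemma sum_paths_nil (F : seq E -> nat) v : (F [::] <= sum_paths src tgt v v F)%N.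
Proof.
have h0 : (0 < #|V|)%N by apply/card_gt0P; exists v.
rewrite /sum_paths (bigD1 (Ordinal h0)) //= (bigD1 [tuple]) /=; last by rewrite eqxx.
by rewrite -addnA leq_addr.
Qed.
Lemma Nb_sum i (x : A i) v w : x * x = x ->
  (\sum_(b : bool) Nb (if b then dsel x v else (1 - dsel x v)%R) w <=
   sum_paths src tgt v w (fun p => \prod_(u <- v :: map tgt p) \dim (fullv : {vspace A u})))%N.
Proof.
move=> xx; rewrite big_bool /= /Nb.
have Hs := idem_split_dim _ (dsel_idem v xx).
case: eqVneq => [->|nwv].
  apply: leq_trans Hs _; apply: leq_trans (sum_paths_nil _ v); by rewrite big_seq1.
rewrite /nn /sum_paths !big_distrl -big_split /=; apply: leq_sum => r _.
rewrite !big_distrl -big_split /=; apply: leq_sum => p Hp.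
have pn : (p : seq E) != [::].
  by apply: contra_neq nwv => p0; move: Hp; rewrite p0 /= eq_sym => /eqP.
rewrite big_cons big_map (prod_last (fun u => \dim (fullv : {vspace A u})) Hp pn).
rewrite -!mulnA -mulnDl leq_mul //.
Qed.

Lemma P_exact i (x : A i) : x * x = x -> forall v w (b : bool),
  \dim (P v (if b then dsel x v else 1 - dsel x v) w) =
  Nb (if b then dsel x v else 1 - dsel x v) w.
Proof.
move=> xx.
pose c v (b : bool) := if b then dsel x v else 1 - dsel x v.
have H1 : (\dim (fullv : {vspace L}) <=
     \sum_v \sum_w \sum_(b : bool) \dim (P v (c v b) w))%N.
  have sub : (fullv <= \sum_v \sum_w \sum_(b : bool) P v (c v b) w)%VS.
    apply/subvP => m _.
    have -> : m = \sum_v \sum_w \sum_(b : bool) (iota v (c v b) * m * one w).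
      have Hs1 : \sum_v one v = 1 by case: HL => _ [_ ->].
      transitivity (\sum_v \sum_w (one v * m * one w)).
        symmetry; under eq_bigr => v _ do rewrite -mulr_sumr Hs1 mulr1.
        by rewrite -mulr_suml Hs1 mul1r.
      apply: eq_bigr => v _; apply: eq_bigr => w _.
      by rewrite big_bool /c /= -mulrDl -mulrDl -linearD /= addrC subrK.
    apply: memv_sumr => v _; apply: memv_sumr => w _; apply: memv_sumr => b _.
    by apply/memP; exists m.
  apply: leq_trans (dimvS sub) _; apply: leq_trans (dimv_leq_sum _ _ _) _.
  apply: leq_sum => v _; apply: leq_trans (dimv_leq_sum _ _ _) _.
  apply: leq_sum => w _; exact: dimv_leq_sum.
have H2 : (\sum_v \sum_w \sum_(b : bool) Nb (c v b) w <= \dim (fullv : {vspace L}))%N.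
  case: HL => _ _ _ _ ->; apply: leq_sum => v _; apply: leq_sum => w _.
  exact: Nb_sum.
have L3 : forall v w, (\sum_(b : bool) \dim (P v (c v b) w) <= \sum_(b : bool) Nb (c v b) w)%N.
  by move=> v w; apply: leq_sum => b _; apply: P_dim.
have L2 : forall v, (\sum_w \sum_(b : bool) \dim (P v (c v b) w) <= \sum_w \sum_(b : bool) Nb (c v b) w)%N.
  by move=> v; apply: leq_sum => w _; apply: L3.
have E1 := sum_squeeze L2 (leq_trans H2 H1).
move=> v w b.
have E2 := sum_squeeze (L3 v) (eq_leq (esym (E1 v))).
exact: (sum_squeeze (fun b => P_dim (c v b) w) (eq_leq (esym (E2 w)))).
Qed.
Section Iso.
Variables (w : V) (n : nat) (Y : 'I_n -> L).
Definition Gf (phi : {ffun 'I_n -> A w}) : L := \sum_(t < n) Y t * iota w (phi t).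
Fact Gf_semilin : semilinear Gf.
Proof.
split=> [a f | f g]; rewrite /Gf.
  rewrite scaler_sumr; apply: eq_bigr => t _; by rewrite !ffunE linearZ scalerAr.
rewrite -big_split; apply: eq_bigr => t _; by rewrite !ffunE linearD mulrDr.
Qed.
HB.instance Definition _ := GRing.isSemilinear.Build k {ffun 'I_n -> A w} L _ Gf Gf_semilin.
Definition Gl : 'Hom({ffun 'I_n -> A w}, L) := linfun Gf.
Lemma GlE phi : Gl phi = \sum_(t < n) Y t * iota w (phi t).
Proof. by rewrite lfunE. Qed.
End Iso.

Lemma dim_ffun w n : \dim (fullv : {vspace {ffun 'I_n -> A w}}) = (n * \dim (fullv : {vspace A w}))%N.
Proof. by rewrite !dimvf /dim /= card_ord. Qed.
Lemma span_prod_sub (X : seq L) w (Z : {vspace L}) :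
  (forall y, y \in X -> forall a : A w, y * iota w a \in Z) -> (<<X>> * I w <= Z)%VS.
Proof.
elim: X => [|y X IH] H; first by rewrite span_nil prod0v sub0v.
rewrite span_cons prodvDl subv_add IH; last by move=> z zX; apply: H; rewrite inE zX orbT.
rewrite andbT; apply/prodvP => u v' /vlineP[al ->] /memv_imgP[a _ ->].
by rewrite -scalerAl; apply: memvZ; apply: H; rewrite inE eqxx.
Qed.

Lemma part2 i (x : A i) (xx : x * x = x) l : l != i ->
  rmod_iso (fun (y : 'rV[A l]_(nn x l)) (a : A l) => \row_t (y 0 t * a))
           (fun (m : L) (a : A l) => m * iota l a)
           (fun _ => True) (fun m => exists y, m = iota i x * y * one l).
Proof.
move=> nli.
have Hdim := P_exact xx i l true; rewrite /= dsel_i /Nb (negbTE nli) in Hdim.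
have [Hsub Hsz] := P_off x nli.
set Yl := Yall <[iota i x]> i l in Hsub Hsz.
set n := nn x l in Hdim Hsz *.
pose Y (t : 'I_n) := nth 0 Yl t.
pose G := Gl l Y.
have GR : forall phi, G phi * one l = G phi.
  move=> phi; rewrite /G GlE mulr_suml; apply: eq_bigr => t _; by rewrite -mulrA iotaR.
have spanG : (<<Yl>> * I l <= limg G)%VS.
  apply: span_prod_sub => y yY a.
  have hs : (index y Yl < n)%N by apply: leq_trans Hsz; rewrite index_mem.
  pose t := Ordinal hs.
  pose phi := [ffun t' : 'I_n => if t' == t then a else 0].
  have -> : y * iota l a = G phi.
    rewrite /G GlE (bigD1 t) //= big1 ?addr0; last first.
      by move=> t' nt; rewrite ffunE (negbTE nt) linear0 mulr0.
    by rewrite ffunE eqxx /Y /= nth_index.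
  exact: memv_img (memvf _).
pose F := (amull (iota i x) \o G)%VF.
have FE : forall phi, F phi = iota i x * G phi by move=> phi; rewrite comp_lfunE amullE.
have F1 : forall phi, exists y, F phi = iota i x * y * one l.
  by move=> phi; exists (G phi); rewrite FE -mulrA GR.
have F2 : forall m, (exists y, m = iota i x * y * one l) -> exists phi, F phi = m.
  move=> m Hm; have mP : m \in P i x l by apply/memP.
  have /memv_imgP[phi _ Gphi] : m \in limg G by apply: (subvP spanG); apply: (subvP Hsub).
  exists phi; rewrite FE -Gphi; case: Hm => y ->.
  by rewrite !mulrA -iota_mul xx.
have Finj : injective F.
  apply/lker0P; rewrite -dimv_eq0.
  have := limg_ker_dim F fullv; rewrite capfv dim_ffun -Hdim.
  have -> : (F @: fullv)%VS = P i x l.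
    apply/eqP; rewrite eqEsubv; apply/andP; split.
      apply/subvP => m /memv_imgP[phi _ ->]; apply/memP; exact: F1.
    apply/subvP => m /memP Hm; have [phi <-] := F2 m Hm; exact: memv_img (memvf _).
  by move=> /eqP; rewrite -[X in (_ == X)%N]add0n eqn_add2r => /eqP ->.
pose ff (y : 'rV[A l]_n) : {ffun 'I_n -> A l} := [ffun t => y 0 t].
exists (fun y => F (ff y)); split.
- by move=> y _; apply: F1.
- by move=> y y' _ _; rewrite -linearD; congr (F _); apply/ffunP => t; rewrite !ffunE mxE.
- move=> y a _; rewrite !FE /G !GlE -mulrA mulr_suml; congr (_ * _).
  by apply: eq_bigr => t _; rewrite !ffunE mxE iota_mul mulrA.
- move=> m Hm; have [phi Fphi] := F2 m Hm; exists (\row_t phi t); split => //.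
  by rewrite -Fphi; congr (F _); apply/ffunP => t; rewrite !ffunE mxE.
- move=> y y' _ _ /Finj H; apply/rowP => t.
  by have := congr1 (fun f : {ffun 'I_n -> A l} => f t) H; rewrite /ff !ffunE.
Qed.
End Main.

Unset Implicit Arguments.

Theorem proposition5p3
  (k : closedFieldType) (V E : finType) (src tgt : E -> V)
  (Hacyc : acyclic src tgt)
  (A : V -> falgType k) (s : V -> nat) (e : forall v, 'I_(s v) -> A v)
  (He : forall v, complete_prim_orth (e v))
  (Hbasic : forall v, basic_wrt (e v))
  (L : falgType k) (iota : forall v, 'Hom(A v, L)) (arr : E -> L)
  (HL : @is_gen_path_algebra k V E src tgt A L iota arr)
  (i : V) (j : 'I_(s i)) :
  let M (l : V) : L -> Prop :=
    fun m => exists x : L, m = iota i (e i j) * x * iota l 1 in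
  (forall m, M i m <-> exists a : A i, m = iota i (e i j * a)) /\
  (forall l : V, l != i ->
     let n := @sum_paths V E src tgt i l
                (fun p => (\dim (prodv <[e i j]> fullv) *
                          \prod_(b <- take (size p).-1 p) \dim (fullv : {vspace A (tgt b)}))%N)
     in rmod_iso (fun (x : 'rV[A l]_n) (a : A l) => \row_t (x 0 t * a))
                 (fun (m : L) (a : A l) => m * iota l a)
                 (fun _ => True) (M l)) /\
  (forall l : V, (forall r (p : r.-tuple E), ~~ pathb src tgt i l p) ->
     forall m, M l m -> m = 0).
Proof.
move=> M.
have xx : e i j * e i j = e i j.
  by have [Hp _ _] := He i; have [] := Hp j.
split; [|split].
- move=> m; split.
    move=> Hm; have mP : m \in P iota (e i j) i by apply/memP.
    have /memv_imgP[a _ ma] := subvP (P_diag HL Hacyc (e i j)) m mP.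
    exists a; case: Hm => y Hy.
    have -> : m = iota i (e i j) * m by rewrite Hy !mulrA -(iota_mul HL) xx.
    by rewrite ma (iota_mul HL).
  move=> [a ->]; exists (iota i a); by rewrite (iota_mul HL) -mulrA (iotaR HL).
- move=> l nli; exact: (part2 HL Hacyc xx nli).
- move=> l Hnp m Hm.
  have nli : l != i.
    apply/eqP => li; subst l; have := Hnp 0%N [tuple]; by rewrite /= eqxx.
  have mP : m \in P iota (e i j) l by apply/memP.
  have [Hsub _] := P_off HL (e i j) nli.
  have := subvP Hsub m mP.
  have -> : Yall src tgt iota arr <[iota i (e i j)]>%VS i l = [::].
    rewrite /Yall big1 // => r _; rewrite big_pred0 // => p; exact: negbTE (Hnp _ _).
  by rewrite span_nil prod0v memv0 => /eqP.
Qed.
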